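(* Let $(X,d)$ be a quasi-tree with bottleneck constant $\Delta\geqslant0$ which is $\delta$-hyperbolic, and let $x_0\in X$. Then the end-approximating map $f:X\to T_X$, $f(x)=[x]$, is a $(1,2(\Delta+2\delta))$-quasi-isometry; more precisely, it is surjective and $d(x,y)-2(\Delta+2\delta)\leqslant d^*([x],[y])\leqslant d(x,y)$ for all $x,y\in X$.
   Context: A quasi-tree is a geodesic metric space quasi-isometric to a simplicial tree. $X$ is $\delta$-hyperbolic if every geodesic triangle is $\delta$-slim (each point of a side is within $\delta$ of the union of the other two sides). A bottleneck constant is $\Delta\geqslant0$ such that for every geodesic $[x,y]$ and every $z\in[x,y]$, every path from $x$ to $y$ meets the closed ball $B(z,\Delta)$. End-approximating tree: with $(x,y)_{x_0}=\frac12(d(x_0,x)+d(x_0,y)-d(x,y))$, set $(x,y)'_{x_0}=\sup\min_{1\leqslant i\leqslant n-1}(x_i,x_{i+1})_{x_0}$ over all finite sequences $x=x_1,\ldots,x_n=y$ in $X$, and $d'(x,y)=d(x_0,x)+d(x_0,y)-2(x,y)'_{x_0}$; $T_X=X/\sim$ with $x\sim y$ iff $d'(x,y)=0$, metric $d^*([x],[y])=d'(x,y)$. A $(1,C)$-quasi-isometry $g$ satisfies $d(a,b)-C\leqslant d(g(a),g(b))\leqslant d(a,b)+C$ and has $C$-dense image. *)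

(* Defs.v *)
From mathcomp Require Import all_boot all_order all_algebra.
From mathcomp Require Import boolp classical_sets reals.
Set Implicit Arguments. Unset Strict Implicit. Unset Printing Implicit Defensive.
Import Order.TTheory GRing.Theory Num.Theory.
Local Open Scope ring_scope.
Local Open Scope classical_set_scope.

Section Defs.
Variables (R : realType) (T : Type) (d : T -> T -> R).

Definition is_metric : Prop :=
  (forall x y, 0 <= d x y) /\ (forall x y, d x y = 0 <-> x = y) /\
  (forall x y, d x y = d y x) /\ (forall x y z, d x z <= d x y + d y z).

Definition geodesic (x y : T) (gam : R -> T) : Prop :=
  gam 0 = x /\ gam (d x y) = y /\
  forall s t, 0 <= s <= d x y -> 0 <= t <= d x y -> d (gam s) (gam t) = `|s - t|.

Definition on_geodesic (x y : T) (gam : R -> T) (z : T) : Prop :=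
  exists t, 0 <= t <= d x y /\ gam t = z.

Definition geodesic_space : Prop := forall x y, exists gam, geodesic x y gam.

Definition path_from_to (x y : T) (p : R -> T) : Prop :=
  p 0 = x /\ p 1 = y /\
  forall t, 0 <= t <= 1 -> forall e, 0 < e -> exists2 eta, 0 < eta &
    forall s, 0 <= s <= 1 -> `|s - t| < eta -> d (p s) (p t) < e.

Definition bottleneck (Delta : R) : Prop :=
  forall x y gam z, geodesic x y gam -> on_geodesic x y gam z ->
  forall p, path_from_to x y p -> exists t, 0 <= t <= 1 /\ d (p t) z <= Delta.

Definition side_close (delta : R) (x y : T) (g : R -> T)
  (y' z : T) (h : R -> T) (z' x' : T) (k : R -> T) : Prop :=
  forall p, on_geodesic x y g p ->
    exists q, (on_geodesic y' z h q \/ on_geodesic z' x' k q) /\ d p q <= delta.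

Definition hyperbolic (delta : R) : Prop :=
  forall x y z gxy gyz gzx,
    geodesic x y gxy -> geodesic y z gyz -> geodesic z x gzx ->
    side_close delta x y gxy y z gyz z x gzx /\
    side_close delta y z gyz z x gzx x y gxy /\
    side_close delta z x gzx x y gxy y z gyz.

Definition gromov (x0 x y : T) : R := (d x0 x + d x0 y - d x y) / 2.

Fixpoint chain_min (x0 a : T) (s : seq T) : R :=
  match s with
  | [::] => 0
  | b :: s' =>
      match s' with
      | [::] => gromov x0 a b
      | _ :: _ => Num.min (gromov x0 a b) (chain_min x0 b s')
      end
  end.

(* (x,y)'_{x0}: sup over finite sequences x = x_1, ..., x_n = y (n >= 2) *)
Definition gromov' (x0 x y : T) : R :=
  sup [set r | exists s : seq T, (0 < size s)%N /\ last x s = y /\ r = chain_min x0 x s].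

Definition dprime (x0 x y : T) : R := d x0 x + d x0 y - 2 * gromov' x0 x y.

(* end-approximating tree T_X = X / ~ as a set of equivalence classes *)
Definition eclass (x0 x : T) : set T := [set y | dprime x0 x y = 0].
Definition TX (x0 : T) : set (set T) := [set S | exists x, S = eclass x0 x].
Definition dstar (x0 : T) (S S' : set T) (r : R) : Prop :=
  exists x y, S = eclass x0 x /\ S' = eclass x0 y /\ r = dprime x0 x y.

End Defs.

Section Trees.
Variables (V : Type) (adj : V -> V -> Prop).

Fixpoint is_walk (u : V) (s : seq V) (v : V) : Prop :=
  match s with
  | [::] => u = v
  | w :: s' => adj u w /\ is_walk w s' v
  end.

Fixpoint inP (a : V) (s : seq V) : Prop :=
  match s with [::] => False | b :: s' => a = b \/ inP a s' end.
Fixpoint distinctP (s : seq V) : Prop :=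
  match s with [::] => True | b :: s' => ~ inP b s' /\ distinctP s' end.

Definition tree_dist (u v : V) (n : nat) : Prop :=
  (exists s, is_walk u s v /\ size s = n) /\
  (forall s, is_walk u s v -> (n <= size s)%N).

Definition simplicial_tree : Prop :=
  (forall u v, adj u v -> adj v u) /\ (forall u, ~ adj u u) /\
  (forall u v, exists s, is_walk u s v) /\
  (* no cycle u -> w1 -> ... -> wk = u with k >= 3 and u, w1, ..., w_{k-1} distinct *)
  (forall u s, (3 <= size s)%N -> is_walk u s u ->
      ~ distinctP (belast u s)).
End Trees.

Definition quasi_tree (R : realType) (T : Type) (d : T -> T -> R) : Prop :=
  exists (V : Type) (adj : V -> V -> Prop) (g : T -> V) (K C : R),
    simplicial_tree adj /\ 1 <= K /\ 0 <= C /\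
    (forall x y n, tree_dist adj (g x) (g y) n ->
        d x y / K - C <= n%:R /\ n%:R <= K * d x y + C) /\
    (forall v, exists x n, tree_dist adj (g x) v n /\ n%:R <= C).

(* Main.v *)
Require Import Defs.
From mathcomp Require Import all_boot all_order all_algebra.
From mathcomp Require Import boolp classical_sets reals.
From mathcomp Require Import lra.
Import Order.TTheory GRing.Theory Num.Theory.
Local Open Scope ring_scope.
Local Open Scope classical_set_scope.

Section Aux.
Set Implicit Arguments. Unset Strict Implicit.
Variables (R : realType) (T : Type) (d : T -> T -> R) (x0 : T).
Hypothesis hm : is_metric d.

Lemma dge0 x y : 0 <= d x y. Proof. by case: hm. Qed.
Lemma dxx x : d x x = 0. Proof. by case: hm => _ [h _]; apply/h. Qed.
Lemma dsym x y : d x y = d y x. Proof. by case: hm => _ [_ [h _]]. Qed.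
Lemma dtri x y z : d x z <= d x y + d y z. Proof. by case: hm => _ [_ [_ h]]. Qed.

Lemma gromov_le_l a b : gromov d x0 a b <= d x0 a.
Proof. rewrite /gromov; have := dtri x0 a b; lra. Qed.
Lemma gromov_le_r a b : gromov d x0 a b <= d x0 b.
Proof. rewrite /gromov; have := dtri x0 b a; rewrite (dsym b a); lra. Qed.

Lemma geo_l x y g t : geodesic d x y g -> 0 <= t <= d x y -> d x (g t) = t.
Proof.
case=> [g0 [g1 gi]] ht; rewrite -[x in d x _]g0 gi //; last first.
  by apply/andP; split; [lra| have := dge0 x y; lra].
by rewrite sub0r normrN ger0_norm //; case/andP: ht.
Qed.

Lemma geo_r x y g t : geodesic d x y g -> 0 <= t <= d x y -> d (g t) y = d x y - t.
Proof.
case=> [g0 [g1 gi]] ht; rewrite -[y in d _ y]g1 gi //; last first.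
  by apply/andP; split; [have := dge0 x y; lra| lra].
by rewrite distrC ger0_norm //; case/andP: ht => _ h; lra.
Qed.

Lemma gromov_le_geo a b g t : geodesic d a b g -> 0 <= t <= d a b ->
  gromov d x0 a b <= d x0 (g t).
Proof.
move=> hg ht; have h1 := geo_l hg ht; have h2 := geo_r hg ht.
rewrite /gromov; have := dtri x0 (g t) a; have := dtri x0 (g t) b.
rewrite (dsym (g t) a); lra.
Qed.

Lemma geo_path a b g : geodesic d a b g -> path_from_to d a b (fun t => g (t * d a b)).
Proof.
move=> hg; case: (hg) => [g0 [g1 gi]]; split; first by rewrite mul0r.
split; first by rewrite mul1r.
have hD := dge0 a b.
move=> t /andP[t0 t1] e e0; exists (e / (d a b + 1)).
  by apply: divr_gt0 => //; lra.
move=> s /andP[s0 s1] hst; rewrite gi; last 2 first.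
- by apply/andP; split; nra.
- by apply/andP; split; nra.
have hpos : 0 < d a b + 1 by lra.
have he : e / (d a b + 1) * (d a b + 1) = e by rewrite divfK // lt0r_neq0.
move: hst; rewrite !ltr_norml => /andP[h1 h2]; apply/andP; split; nra.
Qed.

Definition pcat (p1 p2 : R -> T) (t : R) := if t <= 1/2 then p1 (2*t) else p2 (2*t-1).

Lemma pcat_path a b c p1 p2 : path_from_to d a b p1 -> path_from_to d b c p2 ->
  path_from_to d a c (pcat p1 p2).
Proof.
move=> [p10 [p11 c1]] [p20 [p21 c2]]; split.
  by rewrite /pcat ifT ?mulr0 //; lra.
split.
  rewrite /pcat ifF; last by apply/negbTE; rewrite -ltNge; lra.
  by have ->: 2 * 1 - 1 = 1 :> R by lra.
move=> t /andP[t0 t1] e e0.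
case: (ltgtP t (1/2)) => ht.
- have [|eta1 eta1p H1] := c1 (2*t) _ e e0; first by apply/andP; split; lra.
  exists (Num.min (eta1/2) (1/2 - t)); first by rewrite lt_min; apply/andP; split; lra.
  move=> s /andP[s0 s1]; rewrite lt_min => /andP[h1 h2].
  move: h1 h2; rewrite !ltr_norml => /andP[h1 h1'] /andP[h2 h2'].
  have hs : s <= 1/2 by lra.
  have ht' : t <= 1/2 by lra.
  rewrite /pcat hs ht'; apply: H1; first by apply/andP; split; lra.
  by rewrite ltr_norml; apply/andP; split; lra.
- have [|eta2 eta2p H2] := c2 (2*t-1) _ e e0; first by apply/andP; split; lra.
  exists (Num.min (eta2/2) (t - 1/2)); first by rewrite lt_min; apply/andP; split; lra.
  move=> s /andP[s0 s1]; rewrite lt_min => /andP[h1 h2].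
  move: h1 h2; rewrite !ltr_norml => /andP[h1 h1'] /andP[h2 h2'].
  have hs : (s <= 1/2) = false by apply/negbTE; rewrite -ltNge; lra.
  have ht' : (t <= 1/2) = false by apply/negbTE; rewrite -ltNge; lra.
  rewrite /pcat hs ht'; apply: H2; first by apply/andP; split; lra.
  by rewrite ltr_norml; apply/andP; split; lra.
- subst t.
  have [|eta1 eta1p H1] := c1 1 _ e e0; first by apply/andP; split; lra.
  have [|eta2 eta2p H2] := c2 0 _ e e0; first by apply/andP; split; lra.
  exists (Num.min eta1 eta2 / 2).
    by apply: divr_gt0 => //; rewrite lt_min; apply/andP; split.
  move=> s /andP[s0 s1]; rewrite ltr_norml => /andP[h1 h2].
  have m1 : Num.min eta1 eta2 <= eta1 by rewrite ge_min lexx.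
  have m2 : Num.min eta1 eta2 <= eta2 by rewrite ge_min lexx orbT.
  have hh : (1/2 <= 1/2 :> R) by lra.
  rewrite /pcat hh; have -> : 2 * (1/2) = 1 :> R by lra.
  case: ifP => hs.
    apply: H1; first by apply/andP; split; lra.
    by rewrite ltr_norml; apply/andP; split; lra.
  move/negbT: hs; rewrite -ltNge => hs.
  rewrite p11 -p20; apply: H2; first by apply/andP; split; lra.
  by rewrite ltr_norml; apply/andP; split; lra.
Qed.

Hypothesis hgs : geodesic_space d.

Lemma chain_path a s : (0 < size s)%N -> exists p, path_from_to d a (last a s) p /\
  forall t, 0 <= t <= 1 -> chain_min d x0 a s <= d x0 (p t).
Proof.
elim: s a => [//|b s IH] a _.
have [g hg] := hgs a b.
have hD := dge0 a b.
case: s IH => [|c s'] IH.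
  exists (fun t => g (t * d a b)); split; first exact: geo_path.
  move=> t /andP[t0 t1] /=; apply: gromov_le_geo hg _.
  by apply/andP; split; nra.
have [p2 [hp2 hb2]] := IH b isT.
exists (pcat (fun t => g (t * d a b)) p2); split.
  by apply: pcat_path (geo_path hg) hp2.
move=> t /andP[t0 t1] /=; rewrite /pcat; case: ifP => h.
  rewrite ge_min; apply/orP; left; apply: gromov_le_geo hg _.
  by apply/andP; split; nra.
rewrite ge_min; apply/orP; right; apply: hb2.
move/negbT: h; rewrite -ltNge => h; apply/andP; split; lra.
Qed.

Variable delta Delta : R.
Hypothesis hh : hyperbolic d delta.
Hypothesis hb : bottleneck d Delta.

Lemma near_point x y g : geodesic d x y g -> exists z,
  on_geodesic d x y g z /\ d x0 z <= gromov d x0 x y + 2 * delta.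
Proof.
move=> hg.
have [g1 h1] := hgs y x0. have [g2 h2] := hgs x0 x.
have [H _] := hh hg h1 h2.
set t0 := (d x y + d x0 x - d x0 y) / 2.
have ht0 : 0 <= t0 <= d x y.
  have := dtri x0 x y; have := dtri x0 y x; rewrite (dsym y x).
  by move=> *; apply/andP; split; rewrite /t0; lra.
have hz : on_geodesic d x y g (g t0) by exists t0.
have [q [hq hdq]] := H _ hz.
exists (g t0); split => //.
have hxz := geo_l hg ht0; have hzy := geo_r hg ht0.
rewrite /gromov.
case: hq => [[s [hs hq]]|[s [hs hq]]]; subst q.
- have e1 := geo_l h1 hs; have e2 := geo_r h1 hs.
  have := dtri (g t0) (g1 s) y; have := dtri x0 (g1 s) (g t0).
  rewrite (dsym (g1 s) y) (dsym (g1 s) (g t0)) (dsym x0 (g1 s)) (dsym y x0) in e1 e2 *.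
  move: hxz hzy; rewrite /t0; lra.
- have e1 := geo_l h2 hs; have e2 := geo_r h2 hs.
  have := dtri x (g2 s) (g t0); have := dtri x0 (g2 s) (g t0).
  rewrite (dsym (g2 s) (g t0)) (dsym x (g2 s)).
  move: hxz hzy; rewrite /t0; lra.
Qed.

Lemma chain_bound x y s : (0 < size s)%N -> last x s = y ->
  chain_min d x0 x s <= gromov d x0 x y + Delta + 2 * delta.
Proof.
move=> hs hl.
have [g hg] := hgs x y.
have [z [hz hdz]] := near_point hg.
have [p [hp hpb]] := chain_path x hs.
rewrite hl in hp.
have [t [ht hpt]] := hb hg hz hp.
have := hpb t ht; have := dtri x0 z (p t); rewrite (dsym z (p t)); lra.
Qed.

Definition chA x y := [set r | exists s : seq T,
  (0 < size s)%N /\ last x s = y /\ r = chain_min d x0 x s].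

Lemma chain_le_first a s : chain_min d x0 a s <= d x0 a.
Proof.
case: s => [|b [|c s]] /=; first exact: dge0.
  exact: gromov_le_l.
by rewrite ge_min gromov_le_l.
Qed.

Lemma chain_le_last a s : chain_min d x0 a s <= d x0 (last a s).
Proof.
elim: s a => [|b s IH] a /=; first exact: dge0.
case: s IH => [|c s] IH /=; first exact: gromov_le_r.
by rewrite ge_min IH orbT.
Qed.

Lemma chA_ne x y : chA x y (gromov d x0 x y).
Proof. by exists [:: y]. Qed.

Lemma chA_ub x y : ubound (chA x y) (d x0 y).
Proof. by move=> r [s [_ [<- ->]]]; apply: chain_le_last. Qed.

Lemma chA_ubx x y : ubound (chA x y) (d x0 x).
Proof. by move=> r [s [_ [_ ->]]]; apply: chain_le_first. Qed.

Lemma G'_ge x y : gromov d x0 x y <= gromov' d x0 x y.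
Proof. by apply: ub_le_sup; [exists (d x0 y); apply: chA_ub | apply: chA_ne]. Qed.

Lemma G'_le_r x y : gromov' d x0 x y <= d x0 y.
Proof. by apply: ge_sup; [exists (gromov d x0 x y); apply: chA_ne| apply: chA_ub]. Qed.

Lemma G'_le_l x y : gromov' d x0 x y <= d x0 x.
Proof. by apply: ge_sup; [exists (gromov d x0 x y); apply: chA_ne| apply: chA_ubx]. Qed.

Lemma G'_le_hyp x y : gromov' d x0 x y <= gromov d x0 x y + Delta + 2 * delta.
Proof.
apply: ge_sup; first by exists (gromov d x0 x y); apply: chA_ne.
by move=> r [s [hs [hl ->]]]; apply: chain_bound.
Qed.

Lemma chain_cat a s1 s2 : (0 < size s1)%N -> (0 < size s2)%N ->
  chain_min d x0 a (s1 ++ s2) =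
  Num.min (chain_min d x0 a s1) (chain_min d x0 (last a s1) s2).
Proof.
elim: s1 a => [//|b s1 IH] a _ h2.
case: s1 IH => [|c s1] IH.
  by clear IH; case: s2 h2.
have -> : chain_min d x0 a ((b :: c :: s1) ++ s2) =
  Num.min (gromov d x0 a b) (chain_min d x0 b ((c :: s1) ++ s2)) by [].
rewrite (IH b isT h2) minA.
by [].
Qed.

Lemma G'_tri x y z : Num.min (gromov' d x0 x y) (gromov' d x0 y z) <= gromov' d x0 x z.
Proof.
rewrite leNgt; apply/negP => hlt.
move: hlt; rewrite lt_min => /andP[ha hb'].
have [a [s1 [hs1 [hl1 ->]]] ha'] := sup_gt (ex_intro _ _ (chA_ne x y)) ha.
have [b [s2 [hs2 [hl2 ->]]] hb''] := sup_gt (ex_intro _ _ (chA_ne y z)) hb'.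
have hC : chA x z (chain_min d x0 x (s1 ++ s2)).
  exists (s1 ++ s2); split; first by rewrite size_cat addn_gt0 hs1.
  by split => //; rewrite last_cat hl1.
have hub : has_ubound (chA x z) by exists (d x0 z); apply: chA_ub.
have : chain_min d x0 x (s1 ++ s2) <= gromov' d x0 x z.
  by apply: ub_le_sup hub _ hC.
rewrite chain_cat // hl1 ge_min => /orP[] h; lra.
Qed.

Lemma dprime_tri x y z : dprime d x0 x z <= dprime d x0 x y + dprime d x0 y z.
Proof.
rewrite /dprime; have := G'_tri x y z; have := G'_le_r x y; have := G'_le_l y z.
rewrite ge_min => h1 h2 /orP[] h; lra.
Qed.

Lemma dprime_xx x : dprime d x0 x x = 0.
Proof.
rewrite /dprime; have := G'_ge x x; have := G'_le_l x x.
rewrite /gromov dxx; lra.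
Qed.

End Aux.

Theorem proposition4p2 (R : realType) (T : Type) (d : T -> T -> R)
  (Delta delta : R) (x0 : T) :
  is_metric d -> geodesic_space d -> quasi_tree d ->
  0 <= Delta -> bottleneck d Delta -> hyperbolic d delta ->
  (forall S, TX d x0 S -> exists x, eclass d x0 x = S) /\
  (forall x y r, dstar d x0 (eclass d x0 x) (eclass d x0 y) r ->
     d x y - 2 * (Delta + 2 * delta) <= r /\ r <= d x y).
Proof.
move=> hm hgs _ _ hb hh; split; first by move=> S [x ->]; exists x.
move=> x y r [x' [y' [ex [ey ->]]]].
have e1 : dprime d x0 x x' = 0.
  have h : eclass d x0 x' x' by apply: dprime_xx.
  by rewrite -ex in h.
have e2 : dprime d x0 x' x = 0.
  have h : eclass d x0 x x by apply: dprime_xx.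
  by rewrite ex in h.
have e3 : dprime d x0 y y' = 0.
  have h : eclass d x0 y' y' by apply: dprime_xx.
  by rewrite -ey in h.
have e4 : dprime d x0 y' y = 0.
  have h : eclass d x0 y y by apply: dprime_xx.
  by rewrite ey in h.
have t1 := dprime_tri x0 hm x x' y'.
have t2 := dprime_tri x0 hm x y' y.
have t3 := dprime_tri x0 hm x' x y.
have t4 := dprime_tri x0 hm x' y y'.
have -> : dprime d x0 x' y' = dprime d x0 x y by lra.
have g1 := G'_ge x0 hm x y.
have g2 := G'_le_hyp x0 hm hgs hh hb x y.
rewrite /dprime; move: g1 g2; rewrite /gromov; lra.
Qed.
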